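(* Let $v\in\Sigma^*$, let $u$ be a $v$-minimal word, $i\in\mathrm{supp}(u)$, and let $w$ be a word that $u$-represents $g\in\mathcal{I}_i$. Then for any $a,b\in\Sigma^*$ the word $awb$ $u$-represents $\theta_i(a)\,g\,\theta_i(b)$.
   Context: Let $\mathcal{A}=\langle Q,\Sigma,\delta\rangle$ be a synchronizing automaton with $n$ states $q_1,\dots,q_n$; write $q\cdot u$ for the action of $u\in\Sigma^*$ and $\mathrm{rk}(u)=|Q\cdot u|$. Each word acts linearly on $\mathbb{C}Q$ by $q\mapsto q\cdot u$, preserving $w^\perp=\{x:\langle x,q_1+\dots+q_n\rangle=0\}$; let $\rho:\Sigma^*\to\mathbb{M}_{n-1}(\mathbb{C})$ be the induced representation, $\mathcal{R}$ the $\mathbb{C}$-algebra generated by $\rho(\Sigma^* )$. Write $\mathcal{R}/\mathrm{Rad}(\mathcal{R})\cong\prod_{i=1}^k\mathbb{M}_{n_i}(\mathbb{C})$ (Jacobson radical, Wedderburn–Artin) and let $\theta_i:\Sigma^*\to\mathbb{M}_{n_i}(\mathbb{C})$ be $\rho$ followed by the quotient map and the $i$-th projection; $0_i$ is the zero matrix. The monoid $\theta_i(\Sigma^* )$ has a unique $0$-minimal ideal $\mathcal{I}_i$. The support of a word $z$ is $\mathrm{supp}(z)=\{i:\theta_i(z)\neq0_i\}$. For $v\in\Sigma^*$, a word $u\in\Sigma^*v\Sigma^*$ is $v$-minimal if $\mathrm{supp}(u)\neq\emptyset$ and there is no $z\in\Sigma^*v\Sigma^*$ with $\emptyset\neq\mathrm{supp}(z)\subsetneq\mathrm{supp}(u)$.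 For such $u$, $i\in\mathrm{supp}(u)$ and $g\in\mathcal{I}_i$, a word $w$ $u$-represents $g$ if $w\in\Sigma^*u\Sigma^*$, $\theta_i(w)=g$, and either $g=0_i$ or $\mathrm{rk}(w)$ is minimum among all words $w'\in\Sigma^*u\Sigma^*$ with $\theta_i(w')=g$. *)

(* Defs.v *)
From mathcomp Require Import all_boot all_order all_algebra.
From mathcomp Require Import Rstruct complex.
Set Implicit Arguments. Unset Strict Implicit. Unset Printing Implicit Defensive.
Import GRing.Theory.
Local Open Scope ring_scope.

Definition CC : numClosedFieldType := (Rdefinitions.R)[i].

Section Automaton.
(* An automaton with n = m.+1 states 'I_m.+1 (q_1,...,q_n), finite alphabet
   Sigma, transition function delta.  Words are seq Sigma. *)
Variables (Sigma : finType) (m : nat) (delta : 'I_m.+1 -> Sigma -> 'I_m.+1).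

Definition act (q : 'I_m.+1) (u : seq Sigma) : 'I_m.+1 := foldl delta q u.

Definition rk (u : seq Sigma) : nat := #|[set act q u | q : 'I_m.+1]|.

Definition synchronizing : Prop := exists u : seq Sigma, rk u = 1%N.

(* The representation rho : Sigma^* -> M_{n-1}(C) induced on
   w^perp = {x : <x, q_1 + ... + q_n> = 0}, written in the basis
   b_j = q_j - q_n (j < n-1), with the row-vector convention
   x |-> x *m rho u (so that rho (u ++ v) = rho u *m rho v, matching the
   right action q |-> q . u).  Since b_j . u = q_{j.u} - q_{n.u}, the
   coordinates are the first n-1 entries. *)
Definition rho (u : seq Sigma) : 'M[CC]_m :=
  \matrix_(j < m, l < m)
    (((act (widen_ord (leqnSn m) j) u == widen_ord (leqnSn m) l) : nat)%:R
     - ((act ord_max u == widen_ord (leqnSn m) l) : nat)%:R).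

End Automaton.

Section Algebra.
Variable m : nat.

Definition is_subalgebra (S : 'M[CC]_m -> Prop) : Prop :=
  [/\ S 1%:M,
      (forall A B, S A -> S B -> S (A + B)),
      (forall (c : CC) A, S A -> S (c *: A)) &
      (forall A B, S A -> S B -> S (A *m B))].

Definition gen_alg (X : 'M[CC]_m -> Prop) (A : 'M[CC]_m) : Prop :=
  forall S, is_subalgebra S -> (forall B, X B -> S B) -> S A.

Definition left_ideal (S L : 'M[CC]_m -> Prop) : Prop :=
  [/\ (forall x, L x -> S x), L 0,
      (forall x y, L x -> L y -> L (x - y)) &
      (forall r x, S r -> L x -> L (r *m x))].

Definition maximal_left_ideal (S L : 'M[CC]_m -> Prop) : Prop :=
  [/\ left_ideal S L, (exists x, S x /\ ~ L x) &
      (forall L', left_ideal S L' -> (forall x, L x -> L' x) ->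
         (forall x, L' x -> L x) \/ (forall x, S x -> L' x))].

Definition jacobson_radical (S : 'M[CC]_m -> Prop) (x : 'M[CC]_m) : Prop :=
  S x /\ forall L, maximal_left_ideal S L -> L x.

(* Wedderburn-Artin data: phi = (phi_i)_{i<k} restricted to S is a surjective
   unital C-algebra morphism S -> prod_i M_{n_i}(C) whose kernel is Rad(S);
   i.e. it induces an isomorphism S/Rad(S) ~= prod_i M_{n_i}(C), and phi_i is
   the quotient map followed by the i-th projection. *)
Definition wedderburn_artin (S : 'M[CC]_m -> Prop) (k : nat) (nn : 'I_k -> nat)
    (phi : forall i : 'I_k, 'M[CC]_m -> 'M[CC]_(nn i)) : Prop :=
  (forall i, (0 < nn i)%N) /\
  [/\ forall i, phi i 1%:M = 1%:M,
      forall i (c : CC) A B, S A -> S B -> phi i (c *: A + B) = c *: phi i A + phi i B,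
      forall i A B, S A -> S B -> phi i (A *m B) = phi i A *m phi i B,
      (forall B : (forall i : 'I_k, 'M[CC]_(nn i)),
         exists2 A, S A & forall i, phi i A = B i) &
      forall A, S A -> ((forall i, phi i A = 0) <-> jacobson_radical S A)].

End Algebra.

Section Monoid.
Variable p : nat.
Definition monoid_ideal (M J : 'M[CC]_p -> Prop) : Prop :=
  [/\ (forall x, J x -> M x), (exists x, J x) &
      (forall s x t, M s -> J x -> M t -> J (s *m x *m t))].

Definition zero_minimal_ideal (M J : 'M[CC]_p -> Prop) : Prop :=
  [/\ monoid_ideal M J, (exists x, J x /\ x <> 0) &
      (forall K, monoid_ideal M K -> (forall x, K x -> J x) ->
         (forall x, K x -> x = 0) \/ (forall x, J x -> K x))].

Definition the_zero_minimal_ideal (M J : 'M[CC]_p -> Prop) : Prop :=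
  zero_minimal_ideal M J /\
  forall J', zero_minimal_ideal M J' -> forall x, J' x <-> J x.
End Monoid.

Section Main.
Variables (Sigma : finType) (m : nat) (delta : 'I_m.+1 -> Sigma -> 'I_m.+1).
Variables (k : nat) (nn : 'I_k -> nat)
          (phi : forall i : 'I_k, 'M[CC]_m -> 'M[CC]_(nn i)).

Definition RR : 'M[CC]_m -> Prop :=
  gen_alg (fun A => exists u : seq Sigma, A = rho delta u).

Definition theta (i : 'I_k) (u : seq Sigma) : 'M[CC]_(nn i) := phi i (rho delta u).

Definition theta_monoid (i : 'I_k) (X : 'M[CC]_(nn i)) : Prop :=
  exists u : seq Sigma, X = theta i u.

Definition supp (z : seq Sigma) : {set 'I_k} := [set i | theta i z != 0].

Definition v_minimal (v u : seq Sigma) : Prop :=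
  [/\ infix v u, supp u != set0 &
      ~ exists z, [/\ infix v z, supp z != set0 & supp z \proper supp u]].

(* w u-represents g in I_i (J stands for I_i) *)
Definition u_represents (i : 'I_k) (J : 'M[CC]_(nn i) -> Prop) (u : seq Sigma)
    (w : seq Sigma) (g : 'M[CC]_(nn i)) : Prop :=
  [/\ J g, infix u w, theta i w = g &
      (g = 0 \/ forall w', infix u w' -> theta i w' = g -> (rk delta w <= rk delta w')%N)].
End Main.

Arguments theta_monoid {Sigma m} delta {k nn} phi i X.
Arguments u_represents {Sigma m} delta {k nn} phi i J u w g.
Arguments theta {Sigma m} delta {k nn} phi i u.

(* Main.v *)
Require Import Defs.
From mathcomp Require Import all_boot all_order all_algebra.
From mathcomp Require Import Rstruct complex.
Local Open Scope ring_scope.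
Import GRing.Theory.

Lemma sum_ind_lem (m : nat) (x : 'I_m.+1) (f : 'I_m.+1 -> CC) :
  f ord_max = 0 ->
  \sum_(p < m) (((x == widen_ord (leqnSn m) p) : nat)%:R * f (widen_ord (leqnSn m) p))
  = f x.
Proof.
move=> f0.
transitivity (\sum_(p < m.+1) (((x == p) : nat)%:R * f p)).
  by rewrite big_ord_recr /= f0 mulr0 addr0.
rewrite (bigD1 x) //= eqxx mul1r big1 ?addr0 // => p /negPf.
by rewrite eq_sym => ->; rewrite mul0r.
Qed.

Lemma rho_cat (Sigma : finType) (m : nat) (delta : 'I_m.+1 -> Sigma -> 'I_m.+1)
  (u v : seq Sigma) : rho delta (u ++ v) = rho delta u *m rho delta v.
Proof.
apply/matrixP => j l; rewrite !mxE.
under eq_bigr => p _ do rewrite !mxE mulrBl.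
rewrite sumrB.
set f := fun y : 'I_m.+1 =>
  (((act delta y v == widen_ord (leqnSn m) l) : nat)%:R
   - ((act delta ord_max v == widen_ord (leqnSn m) l) : nat)%:R : CC).
rewrite (@sum_ind_lem m _ f); last by rewrite /f subrr.
rewrite (@sum_ind_lem m _ f); last by rewrite /f subrr.
rewrite /f /act !foldl_cat.
by rewrite opprB addrA subrK.
Qed.

Lemma rho_nil (Sigma : finType) (m : nat) (delta : 'I_m.+1 -> Sigma -> 'I_m.+1) :
  rho delta [::] = 1%:M.
Proof.
apply/matrixP => j l; rewrite !mxE /act /=.
have -> : (ord_max == widen_ord (leqnSn m) l) = false.
  by apply/negbTE; apply/eqP => /(congr1 val) /= E; move: (ltn_ord l); rewrite -E ltnn.
have -> : (widen_ord (leqnSn m) j == widen_ord (leqnSn m) l) = (j == l).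
  by apply/eqP/eqP => [/(congr1 val) /= E|->]; [apply: val_inj|].
by rewrite subr0; case: (j == l).
Qed.

Lemma rk_catl (Sigma : finType) (m : nat) (delta : 'I_m.+1 -> Sigma -> 'I_m.+1)
  (x y : seq Sigma) : (rk delta (x ++ y) <= rk delta y)%N.
Proof.
apply: subset_leq_card; apply/subsetP => z /imsetP [q _ ->].
by rewrite /act foldl_cat; apply: imset_f.
Qed.

Lemma rk_catr (Sigma : finType) (m : nat) (delta : 'I_m.+1 -> Sigma -> 'I_m.+1)
  (x y : seq Sigma) : (rk delta (x ++ y) <= rk delta x)%N.
Proof.
rewrite /rk.
have -> : [set act delta q (x ++ y) | q : 'I_m.+1] =
          (fun z => act delta z y) @: [set act delta q x | q : 'I_m.+1].
  by rewrite -imset_comp; apply: eq_imset => q; rewrite /act foldl_cat.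
exact: leq_imset_card.
Qed.

Theorem mainTheorem6 (Sigma : finType) (m : nat)
    (delta : 'I_m.+1 -> Sigma -> 'I_m.+1)
    (Hsync : synchronizing delta)
    (k : nat) (nn : 'I_k -> nat)
    (phi : forall i : 'I_k, 'M[CC]_m -> 'M[CC]_(nn i))
    (HWA : wedderburn_artin (RR delta) phi)
    (v u : seq Sigma) (Hu : v_minimal delta phi v u)
    (i : 'I_k) (Hi : i \in supp delta phi u)
    (J : 'M[CC]_(nn i) -> Prop)
    (HJ : the_zero_minimal_ideal (theta_monoid delta phi i) J)
    (g : 'M[CC]_(nn i)) (w : seq Sigma)
    (Hw : u_represents delta phi i J u w g)
    (a b : seq Sigma) :
  u_represents delta phi i J u (a ++ w ++ b)
    (theta delta phi i a *m g *m theta delta phi i b).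
Proof.
case: HWA => _ [Hone _ Hmul _ _].
have RRrho : forall x, RR delta (rho delta x).
  by move=> x S _ HS; apply: HS; exists x.
have thmul : forall x y, theta delta phi i (x ++ y) =
    theta delta phi i x *m theta delta phi i y.
  by move=> x y; rewrite /theta rho_cat Hmul.
have thnil : theta delta phi i [::] = 1%:M by rewrite /theta rho_nil Hone.
have th3 : forall x y z, theta delta phi i (x ++ y ++ z) =
    theta delta phi i x *m theta delta phi i y *m theta delta phi i z.
  by move=> x y z; rewrite !thmul mulmxA.
case: HJ => [[[HJM HJex HJid] _ Hmin] _].
case: Hw => [Jg Huw Hthw Hrk].
have Mth : forall x, theta_monoid delta phi i (theta delta phi i x) by move=> x; exists x.
split.
- by apply: HJid.
- by apply: infix_catl; apply: infix_catr.
- by rewrite th3 Hthw.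
set h := theta delta phi i a *m g *m theta delta phi i b.
have [->|hnz] := eqVneq h 0; first by left.
right => w' Huw' Hthw'.
pose K := fun x => exists c d : seq Sigma,
  x = theta delta phi i c *m h *m theta delta phi i d.
have hK : K h by exists [::], [::]; rewrite thnil mul1mx mulmx1.
have hJ : J h by rewrite /h; apply: HJid => //; rewrite -Hthw.
have hM : theta_monoid delta phi i h by apply: HJM.
have KJ : forall x, K x -> J x.
  by move=> x [c [d ->]]; apply: HJid.
have HK : monoid_ideal (theta_monoid delta phi i) K.
  split.
  - by move=> x /KJ /HJM.
  - by exists h.
  - move=> s x t [c ->] [c' [d' ->]] [d ->].
    exists (c ++ c'), (d' ++ d); rewrite !thmul !mulmxA //.
case: (Hmin K HK KJ) => [/(_ h hK) h0|JK]; first by rewrite h0 eqxx in hnz.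
have [c [d gE]] := JK g Jg.
have gnz : g <> 0.
  by move=> g0; move: hnz; rewrite /h g0 mulmx0 mul0mx eqxx.
case: Hrk => [//|Hrk].
have H1 := Hrk (c ++ w' ++ d).
have H2 : (rk delta w <= rk delta (c ++ w' ++ d))%N.
  apply: H1; first by apply: infix_catl; apply: infix_catr.
  by rewrite th3 Hthw' gE.
have A1 := @rk_catl _ _ delta a (w ++ b).
have A2 := @rk_catr _ _ delta w b.
have A3 := @rk_catl _ _ delta c (w' ++ d).
have A4 := @rk_catr _ _ delta w' d.
apply: (leq_trans A1); apply: (leq_trans A2); apply: (leq_trans H2); apply: (leq_trans A3); exact: A4.
Qed.
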